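(* Consider an instance of rooted $k$-robust Steiner tree on an undirected graph $G=(V,E)$ with edge costs $c$, root $r$ and terminal set $U\subseteq V$, a threshold $T\ge0$, and a constant $\beta>2$. Let $S$ be constructed by starting with $S=\{r\}$ and, while some terminal $v\in U$ has $d(v,S)>\beta\frac{T}{k}$, adding such a $v$ to $S$; let $\Phi_T$ be a minimum spanning tree on $S$ (with respect to shortest-path distances, realized by the corresponding shortest paths). Let $\Phi^*$ and $T^*$ denote the first-stage cost and second-stage cost of an optimal solution of the $k$-robust instance. If $T\ge T^*$ then $c(\Phi_T)\le\frac{2\beta}{\beta-2}\cdot\Phi^*+2\cdot T^*$.
   Context: $d$ is the shortest-path distance in $G$ and $d(v,S)=\min_{w\in S}d(v,w)$. Rooted $k$-robust Steiner tree: inflation $\lambda\ge1$, integer $k\ge1$; a feasible solution is a first-stage edge set $E_0$ and, for each $D\subseteq U$ with $|D|=k$, an edge set $E_D$ such that $E_0\cup E_D$ connects every terminal of $D$ to $r$; its cost is $c(E_0)+\lambda\max_Dc(E_D)$, with first-stage cost $c(E_0)$ and second-stage cost $\max_Dc(E_D)$. *)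

(* Defs.v *)
From HB Require Import structures.
From mathcomp Require Import all_boot all_order all_algebra.
From mathcomp Require Import boolp classical_sets reals.
Set Implicit Arguments. Unset Strict Implicit. Unset Printing Implicit Defensive.
Import Order.TTheory GRing.Theory Num.Theory.
Local Open Scope ring_scope.

Section Steiner.
Variables (R : realType) (V : finType).
(* The graph G: edges are 2-element vertex sets; c gives edge costs. *)
Variables (E : {set {set V}}) (c : {set V} -> R).

Definition edge_cost (F : {set {set V}}) : R := \sum_(e in F) c e.

Definition connects (F : {set {set V}}) (x y : V) : bool :=
  connect (fun a b => [set a; b] \in F) x y.

Definition walk_cost (u : V) (p : seq V) : R :=
  \sum_(ab <- zip (u :: p) p) c [set ab.1; ab.2].

Definition dist (u v : V) : R :=
  inf (fun x : R => exists p : seq V,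
         [/\ path (fun a b => [set a; b] \in E) u p, last u p = v & x = walk_cost u p]).

Definition distS (v : V) (S : {set V}) : R :=
  inf [set dist v w | w in [set w | w \in S]]%classic.

Variables (r : V) (U : {set V}) (lambda : R) (k : nat).

Definition scenarios : {set {set V}} := [set D : {set V} | (D \subset U) && (#|D| == k)].

Definition feasible (E0 : {set {set V}}) (ED : {set V} -> {set {set V}}) : Prop :=
  E0 \subset E /\
  forall D, D \in scenarios ->
    ED D \subset E /\ forall v, v \in D -> connects (E0 :|: ED D) v r.

Definition second_stage (ED : {set V} -> {set {set V}}) : R :=
  \big[Num.max/0]_(D in scenarios) edge_cost (ED D).

Definition robust_cost E0 ED : R := edge_cost E0 + lambda * second_stage ED.

Definition optimal E0 ED : Prop :=
  feasible E0 ED /\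
  forall E0' ED', feasible E0' ED' -> robust_cost E0 ED <= robust_cost E0' ED'.

(* s = [v_1; ...; v_m] is a possible run of the greedy construction of S with
   threshold beta*T/k, S = {r, v_1, ..., v_m}: each added v_i is a terminal far from
   the current set, and at termination no terminal is far from S. *)
Definition greedy_run (beta T : R) (s : seq V) : Prop :=
  (forall i, (i < size s)%N ->
     nth r s i \in U /\
     beta * T / k%:R < distS (nth r s i) (r |: [set x in take i s])) /\
  (forall v, v \in U -> distS v (r |: [set x in s]) <= beta * T / k%:R).

Definition greedy_set (s : seq V) : {set V} := r |: [set x in s].

(* spanning trees on S in the metric closure (edges stored as ordered pairs) *)
Definition mtree_weight (F : {set V * V}) : R := \sum_(p in F) dist p.1 p.2.

Definition spanning_tree_on (S : {set V}) (F : {set V * V}) : Prop :=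
  [/\ forall p, p \in F -> [/\ p.1 \in S, p.2 \in S & p.1 != p.2],
      #|F| = (#|S|).-1
    & forall x y, x \in S -> y \in S ->
        connect (fun a b => ((a, b) \in F) || ((b, a) \in F)) x y].

Definition mst_on (S : {set V}) (F : {set V * V}) : Prop :=
  spanning_tree_on S F /\
  forall F', spanning_tree_on S F' -> mtree_weight F <= mtree_weight F'.

End Steiner.

(* Main.v *)
Require Import Defs.
From HB Require Import structures.
From mathcomp Require Import all_boot all_order all_algebra.
From mathcomp Require Import boolp classical_sets reals.
From mathcomp Require Import ring lra zify.
Import Order.TTheory GRing.Theory Num.Theory.
Local Open Scope ring_scope.

Section Main.
Variables (R : realType) (V : finType) (E : {set {set V}}) (c : {set V} -> R) (r : V).
Hypothesis E2 : forall e, e \in E -> #|e| = 2%N.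
Hypothesis c0 : forall e, e \in E -> 0 <= c e.

Definition adj (H : {set {set V}}) : rel V := fun a b => [set a; b] \in H.
Local Notation d := (dist E c).
Local Notation wc := (walk_cost c).
Definition reach y := connects E r y.

Lemma adj_sym (H : {set {set V}}) : symmetric (adj H).
Proof. by move=> a b; rewrite /adj finset.setUC. Qed.

Lemma connectsE (H : {set {set V}}) (x y : V) : connects H x y = connect (adj H) x y.
Proof. by []. Qed.

Lemma connects_sym (H : {set {set V}}) (x y : V) : connects H x y = connects H y x.
Proof. exact: (sym_connect_sym (adj_sym H) x y). Qed.

Lemma connects_trans (H : {set {set V}}) (x y z : V) : connects H x y -> connects H y z -> connects H x z.
Proof. exact: connect_trans. Qed.

Lemma connects_sub (H1 H2 : {set {set V}}) (x y : V) : H1 \subset H2 -> connects H1 x y -> connects H2 x y.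
Proof.
move=> sH; apply: (@connect_sub _ (adj H1) (adj H2)) => a b h.
by apply: connect1; rewrite /adj (fintype.subsetP sH).
Qed.

Lemma wc_cons u y p : wc u (y :: p) = c [set u; y] + wc y p.
Proof. by rewrite /walk_cost /= big_cons. Qed.

Lemma wc_nil u : wc u [::] = 0.
Proof. by rewrite /walk_cost /= big_nil. Qed.

Lemma wc_cat u p q : wc u (p ++ q) = wc u p + wc (last u p) q.
Proof.
elim: p u => [|y p IH] u /=; first by rewrite wc_nil add0r.
by rewrite !wc_cons IH addrA.
Qed.

Lemma wc_ge0 u p : path (adj E) u p -> 0 <= wc u p.
Proof.
elim: p u => [|y p IH] u /=; first by rewrite wc_nil.
move/andP=> [e pe]; rewrite wc_cons addr_ge0 //; [exact: c0 | exact: IH].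
Qed.

Definition DS u v : set R := fun x => exists p : seq V,
  [/\ path (adj E) u p, last u p = v & x = wc u p].

Lemma distE u v : d u v = inf (DS u v).
Proof. by []. Qed.

Lemma DS_lb u v : has_lbound (DS u v).
Proof. by exists 0 => x [p [hp _ ->]]; exact: wc_ge0. Qed.

Lemma dist_le u p : path (adj E) u p -> d u (last u p) <= wc u p.
Proof. by move=> hp; rewrite distE; apply: (ge_inf (DS_lb _ _)); exists p. Qed.

Lemma dist_ge0 u v : 0 <= d u v.
Proof.
rewrite distE; have [ne|ne] := pselect ((DS u v) !=set0)%classic.
  by apply: lb_le_inf => // x [p [hp _ ->]]; exact: wc_ge0.
by rewrite inf_out // => -[].
Qed.

Lemma dist_refl u : d u u = 0.
Proof.
apply: le_anti; rewrite dist_ge0 andbT.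
by have := @dist_le u [::] isT; rewrite wc_nil.
Qed.

Lemma dist_ge u v x : (exists p, path (adj E) u p /\ last u p = v) ->
  (forall p, path (adj E) u p -> last u p = v -> x <= wc u p) -> x <= d u v.
Proof.
move=> [p0 [h0 l0]] H; rewrite distE; apply: lb_le_inf; first by exists (wc u p0), p0.
by move=> y [p [hp lp ->]]; exact: H.
Qed.

Lemma walk_rev p u : path (adj E) u p -> exists q,
  [/\ path (adj E) (last u p) q, last (last u p) q = u & wc (last u p) q = wc u p].
Proof.
elim: p u => [|y p IH] u /=; first by move=> _; exists [::]; rewrite wc_nil.
move/andP=> [e pe]; have [q [hq lq wq]] := IH y pe.
exists (q ++ [:: u]); split.
- by rewrite cat_path hq lq /= andbT adj_sym.
- by rewrite last_cat.
- by rewrite wc_cat lq wq wc_cons wc_nil addr0 wc_cons finset.setUC addrC.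
Qed.

Lemma dist_sym_le u v : d u v <= d v u.
Proof.
have [ne|ne] := pselect ((DS v u) !=set0)%classic.
  rewrite [d v u]distE; apply: lb_le_inf => // x [p [hp lp ->]].
  have [q [hq lq wq]] := walk_rev _ _ hp.
  by rewrite -wq; move: hq lq; rewrite lp => hq lq; rewrite -{1}lq dist_le.
rewrite [d v u]distE inf_out; last by move=> [].
rewrite distE inf_out // => -[[x [p [hp lp _]]] _]; apply: ne.
have [q [hq lq wq]] := walk_rev _ _ hp.
by exists (wc (last u p) q), q; rewrite -lp.
Qed.

Lemma dist_sym u v : d u v = d v u.
Proof. by apply: le_anti; rewrite !dist_sym_le. Qed.

Lemma reach_walk u v : reach u -> reach v ->
  exists p, path (adj E) u p /\ last u p = v.
Proof.
move=> hu hv; have : connects E u v.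
  by apply: connects_trans hv; rewrite connects_sym.
by rewrite connectsE => /connectP [p hp ->]; exists p.
Qed.

Lemma dist_tri u v w : reach u -> reach v -> reach w -> d u w <= d u v + d v w.
Proof.
move=> hu hv hw.
have key : forall q, path (adj E) v q -> last v q = w -> d u w - wc v q <= d u v.
  move=> q hq lq; apply: dist_ge; first exact: reach_walk.
  move=> p hp lp; rewrite lerBlDr.
  have := @dist_le u (p ++ q); rewrite cat_path hp lp hq last_cat lp lq.
  by rewrite wc_cat lp; apply.
rewrite -lerBlDl; apply: dist_ge; first exact: reach_walk.
by move=> q hq lq; rewrite lerBlDl -lerBlDr; exact: key.
Qed.

Lemma dist_edge a b : [set a; b] \in E -> d a b <= c [set a; b].
Proof.
move=> h; have := @dist_le a [:: b]; rewrite /= wc_cons wc_nil addr0.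
by apply; rewrite /adj h.
Qed.

Lemma reach_adj (H : {set {set V}}) a b : H \subset E -> reach a -> adj H a b -> reach b.
Proof.
move=> sH ha hab; apply: connects_trans ha _; rewrite connectsE; apply: connect1.
by rewrite /adj (fintype.subsetP sH).
Qed.


Definition pc (x : V) (s : seq V) : R := \sum_(ab <- zip (x :: s) s) d ab.1 ab.2.

Lemma pc_nil x : pc x [::] = 0.
Proof. by rewrite /pc /= big_nil. Qed.

Lemma pc_cons x y s : pc x (y :: s) = d x y + pc y s.
Proof. by rewrite /pc /= big_cons. Qed.

Lemma pc_cat x s1 s2 : pc x (s1 ++ s2) = pc x s1 + pc (last x s1) s2.
Proof.
elim: s1 x => [|y s IH] x /=; first by rewrite pc_nil add0r.
by rewrite !pc_cons IH addrA.
Qed.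

Lemma pc_ge0 x s : 0 <= pc x s.
Proof. by rewrite /pc; apply: sumr_ge0 => i _; exact: dist_ge0. Qed.

Lemma ecost_ge0 (H : {set {set V}}) : H \subset E -> 0 <= edge_cost c H.
Proof. by move=> sH; apply: sumr_ge0 => e eH; apply: c0; rewrite (fintype.subsetP sH). Qed.

Lemma set2_eq (a b x y : V) : [set a; b] = [set x; y] ->
  a = b \/ (a = x /\ b = y) \/ (a = y /\ b = x).
Proof.
move=> h; have ha : a \in [set x; y] by rewrite -h set21.
have hb : b \in [set x; y] by rewrite -h set22.
case/set2P: ha => ->; case/set2P: hb => ->; tauto.
Qed.

Lemma tour (H : {set {set V}}) x : H \subset E -> reach x -> exists s,
  [/\ last x s = x, pc x s <= 2 * edge_cost c H,
      (forall y, connects H x y -> y \in x :: s) &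
      (forall y, y \in x :: s -> connects H x y)].
Proof.
have [n] := ubnP #|H|; elim: n H x => // n IH H x Hn sH hx.
case: (pickP (fun e => (e \in H) && (x \in e))) => [e /andP [eH xe] | none]; last first.
  exists [::]; split => //.
  - by rewrite pc_nil mulr_ge0 // ecost_ge0.
  - move=> y; rewrite connectsE => /connectP [[|z p] /= hp ->]; first by rewrite mem_head.
    case/andP: hp => hz _; have := none [set x; z]; move: hz; rewrite /adj => ->.
    by rewrite set21.
  - by move=> y; rewrite inE => /eqP ->; exact: connect0.
have e2 : #|e :\ x| == 1%N.
  by move: (E2 _ (fintype.subsetP sH _ eH)); rewrite (cardsD1 x) xe => -[]; rewrite add0n => ->.
case/cards1P: e2 => b eb.
have bx : b != x by have := set11 b; rewrite -eb !inE => /andP [].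
have ee : e = [set x; b] by rewrite -(@finset.setD1K _ x e xe) eb.
subst e.
set H' := H :\ [set x; b].
have sH' : H' \subset E := fintype.subset_trans (subD1set _ _) sH.
have cH : edge_cost c H = c [set x; b] + edge_cost c H' by rewrite /edge_cost (big_setD1 _ eH).
have cxb : 0 <= c [set x; b] by apply: c0; rewrite (fintype.subsetP sH).
have HnH' : (#|H'| < n)%N.
  by move: Hn; rewrite (cardsD1 [set x; b] H) eH.
have sHH : H' \subset H := subD1set _ _.
have hb : reach b by apply: reach_adj sH hx _; rewrite /adj.
case: (boolP (connects H' x b)) => hxb.
  have [s [ls ps cov1 cov2]] := IH H' x HnH' sH' hx.
  exists s; split => //.
  - by rewrite cH; apply: le_trans ps _; rewrite ler_pM2l //; lra.
  - move=> y hy; apply: cov1; move: hy; apply: (@connect_sub _ (adj H) (adj H')).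
    move=> a a' haa'; case: (boolP ([set a; a'] == [set x; b])) => [/eqP/set2_eq|ne].
      case=> [->|[[-> ->]|[-> ->]]]; [exact: connect0 | exact: hxb | ].
      by rewrite connects_sym in hxb.
    by apply: connect1; rewrite /adj !inE ne.
  - by move=> y /cov2; apply: connects_sub.
pose H1 := [set f in H' | [exists z in f, connects H' x z]].
pose H2 := H' :\: H1.
have sH1 : H1 \subset H' by apply/fintype.subsetP => f; rewrite inE => /andP [].
have sH2 : H2 \subset H' := finset.subsetDl _ _.
have cH' : edge_cost c H' = edge_cost c H1 + edge_cost c H2.
  by rewrite /edge_cost (big_setID H1) (finset.setIidPr sH1).
have [s1 [ls1 ps1 cv1 cw1]] := IH H1 x (leq_ltn_trans (subset_leq_card sH1) HnH')
   (fintype.subset_trans sH1 sH') hx.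
have [s2 [ls2 ps2 cv2 cw2]] := IH H2 b (leq_ltn_trans (subset_leq_card sH2) HnH')
   (fintype.subset_trans sH2 sH') hb.
have comp1 : forall p z, connects H' x z -> path (adj H') z p -> path (adj H1) z p.
  elim=> [|y p IHp] z //= hz /andP [hzy hp]; apply/andP; split.
    by rewrite /adj in hzy *; rewrite inE hzy; apply/existsP; exists z; rewrite set21 hz.
  by apply: IHp hp; apply: connects_trans hz _; rewrite connectsE connect1.
have comp2 : forall p z, connects H' b z -> path (adj H') z p -> path (adj H2) z p.
  elim=> [|y p IHp] z //= hz /andP [hzy hp].
  have hy : connects H' b y by apply: connects_trans hz _; rewrite connectsE connect1.
  apply/andP; split; last exact: IHp.
  rewrite /adj in hzy *; rewrite /H2 inE hzy andbT inE hzy /=; apply/negP => /existsP [w /andP [wf hw]].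
  move/negP: hxb; apply.
  case/set2P: wf => ?; subst w.
    by apply: connects_trans hw _; rewrite connects_sym.
  by apply: connects_trans hw _; rewrite connects_sym.
have cover : forall y, connects H x y -> connects H' x y || connects H' b y.
  have gen : forall p z, path (adj H) z p -> (connects H' x z || connects H' b z) ->
      (connects H' x (last z p) || connects H' b (last z p)).
    elim=> [|y' p IHp] z //= /andP [hzy hp] hz.
  apply: IHp hp _.
  case: (boolP ([set z; y'] == [set x; b])) => [/eqP/set2_eq|ne].
    case=> [<- //|[[_ ->]|[_ ->]]]; by rewrite /connects ?connect0 ?orbT.
  have e' : connects H' z y' by rewrite connectsE connect1 // /adj !inE ne.
  by case/orP: hz => h; apply/orP; [left|right]; apply: connects_trans h e'.
  move=> y; rewrite connectsE => /connectP [p hp ->]; apply: gen hp _.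
  by rewrite connectsE connect0.
exists (s1 ++ b :: (s2 ++ [:: x])); split.
- by rewrite last_cat /= last_cat.
- rewrite pc_cat ls1 pc_cons pc_cat ls2 pc_cons pc_nil cH cH' (dist_sym b x).
  have := dist_edge _ _ (fintype.subsetP sH _ eH); lra.
- move=> y /cover /orP [] h.
    have : y \in x :: s1.
      apply: cv1; move: h; rewrite !connectsE => /connectP [p hp ->].
      by apply/connectP; exists p => //; apply: comp1 hp; rewrite connectsE connect0.
    by rewrite !inE mem_cat => /orP [->|->]; rewrite ?orbT.
  have : y \in b :: s2.
    apply: cv2; move: h; rewrite !connectsE => /connectP [p hp ->].
    by apply/connectP; exists p => //; apply: comp2 hp; rewrite connectsE connect0.
  by rewrite !inE mem_cat /= inE mem_cat => /orP [->|->]; rewrite ?orbT.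
- move=> y; rewrite inE mem_cat inE mem_cat inE.
  have xb : connects H x b by rewrite connectsE connect1.
  case/orP=> [/eqP ->|/orP [hy|/orP [/eqP ->|/orP [hy|/eqP ->]]]]; rewrite ?connectsE ?connect0 //.
  + by apply: (@connects_sub H1 H x y (fintype.subset_trans sH1 sHH)); apply: cw1; rewrite inE hy orbT.
  + apply: (@connects_trans H x b y xb); apply: (@connects_sub H2 H b y (fintype.subset_trans sH2 sHH)).
    by apply: cw2; rewrite inE hy orbT.
Qed.


Lemma pc_subseq x u w : reach x -> (forall y, y \in w -> reach y) -> subseq u w ->
  pc x u <= pc x w.
Proof.
elim: w x u => [|y w IH] x u hx hw.
  by rewrite subseq0 => /eqP ->.
case: u => [|z u] sub; first by rewrite pc_nil pc_ge0.
have hy : reach y by apply: hw; rewrite mem_head.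
have hw' : forall t, t \in w -> reach t by move=> t ht; apply: hw; rewrite inE ht orbT.
move: sub => /=; case: eqP => [->|ne] sub.
  by rewrite !pc_cons lerD2l; apply: IH.
apply: le_trans (IH x (z :: u) hx hw' sub) _.
rewrite pc_cons; case: w {IH hw sub} hw' => [|t w] hw'; first by rewrite !pc_nil addr0 dist_ge0.
rewrite !pc_cons addrA lerD2r; apply: dist_tri => //; apply: hw'; exact: mem_head.
Qed.

Lemma zip_props (w : seq V) a b : uniq w -> (a, b) \in zip w (behead w) ->
  [/\ a \in w, b \in w & a != b].
Proof.
elim: w => [|x [|y t] IH] //= /andP [xn un].
rewrite inE => /orP [/eqP [-> ->]|h].
  split; rewrite ?mem_head ?inE ?eqxx ?orbT //.
  by apply: contraNneq xn => ->; rewrite mem_head.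
have [ha hb ab] := IH un h; by split => //; rewrite inE ?ha ?hb orbT.
Qed.

Definition ptree (u : seq V) : {set V * V} := [set p | p \in zip (r :: u) u].

Lemma ptree_ok (S : {set V}) (u : seq V) : uniq (r :: u) ->
  (forall y, (y \in S) = (y \in r :: u)) ->
  spanning_tree_on S (ptree u) /\ mtree_weight E c (ptree u) = pc r u.
Proof.
move=> un hS; split; last first.
  rewrite /mtree_weight /pc (big_uniq _ (zip_uniql _ un)).
  by apply: eq_bigl => p; rewrite inE.
split.
- move=> [a b]; rewrite inE /= => h; have [ha hb ab] := @zip_props _ a b un h.
  by rewrite !hS.
- rewrite /ptree cardsE (card_uniqP (zip_uniql _ un)) size_zip /= (minn_idPr (leqnSn _)).
  have -> : #|S| = #|r :: u| by apply: eq_card => y; rewrite hS.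
  by rewrite (card_uniqP un).
- pose Q := fun a b => ((a, b) \in ptree u) || ((b, a) \in ptree u).
  have Qs : symmetric Q by move=> a b; rewrite /Q orbC.
  have gen : forall t x, {subset zip (x :: t) t <= zip (r :: u) u} ->
      forall y, y \in x :: t -> connect Q x y.
    elim=> [|z t IH] x sub y; first by rewrite inE => /eqP ->; exact: connect0.
    rewrite inE => /orP [/eqP ->|hy]; first exact: connect0.
    apply: (@connect_trans _ _ z x y).
      by apply: connect1; rewrite /Q inE sub ?orTb // mem_head.
    by apply: IH => // p hp; apply: sub; rewrite /= inE hp orbT.
  have hr : forall y, y \in r :: u -> connect Q r y by apply: gen.
  move=> x y; rewrite !hS => hx hy; apply: (@connect_trans _ _ r x y).
    by rewrite (sym_connect_sym Qs); apply: hr.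
  exact: hr.
Qed.

Lemma steiner_bound (H : {set {set V}}) (S : {set V}) (Fm : {set V * V}) :
  H \subset E -> r \in S -> (forall y, y \in S -> connects H r y) ->
  mst_on E c S Fm -> mtree_weight E c Fm <= 2 * edge_cost c H.
Proof.
move=> sH rS cS [_ mst].
have hr : reach r by exact: connect0.
have [s [_ ps cov cw]] := tour _ _ sH hr.
pose u := undup [seq y <- s | (y \in S) && (y != r)].
have un : uniq (r :: u).
  by rewrite /= undup_uniq andbT mem_undup mem_filter eqxx andbF.
have hS : forall y, (y \in S) = (y \in r :: u).
  move=> y; rewrite inE mem_undup mem_filter.
  case: (eqVneq y r) => [->|yr] //=.
  case yS: (y \in S) => //=; symmetry.
  by have := cov y (cS y yS); rewrite inE (negbTE yr).
have [tr wt] := ptree_ok _ _ un hS.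
apply: le_trans (mst _ tr) _; rewrite wt; apply: le_trans ps.
apply: pc_subseq => //.
  move=> y ys; apply: (@connects_sub H E r y sH); apply: cw; by rewrite inE ys orbT.
exact: subseq_trans (undup_subseq _) (filter_subseq _ _).
Qed.


Set Implicit Arguments. Unset Strict Implicit.

Lemma sum_sub (T : finType) (L A : {set T}) (h : T -> R) : L \subset A ->
  (forall e, e \in A -> 0 <= h e) -> \sum_(e in L) h e <= \sum_(e in A) h e.
Proof.
move=> sLA h0; rewrite [X in _ <= X](big_setID L) (finset.setIidPr sLA) lerDl.
by apply: sumr_ge0 => e; rewrite inE => /andP [_]; apply: h0.
Qed.

Lemma sum_one (T : finType) (Y : {set T}) (h : T -> R) v0 :
  0 <= h v0 -> (forall v, v \in Y -> v != v0 -> h v = 0) ->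
  \sum_(v in Y) h v <= h v0.
Proof.
move=> h0 hz; case: (boolP (v0 \in Y)) => hv0.
  rewrite (bigD1 v0) //= big1 ?addr0 // => v /andP [vY vv]; exact: hz.
rewrite big1 // => v vY; apply: hz => //; by apply: contraNneq hv0 => <-.
Qed.

Lemma sum_two (T : finType) (Y : {set T}) (h : T -> R) v1 v2 : v1 != v2 ->
  0 <= h v1 -> 0 <= h v2 -> (forall v, v \in Y -> v != v1 -> v != v2 -> h v = 0) ->
  \sum_(v in Y) h v <= h v1 + h v2.
Proof.
move=> v12 h1 h2 hz.
pose h1' := fun v => if v == v1 then h v else 0.
pose h2' := fun v => if v == v2 then h v else 0.
apply: (@le_trans _ _ (\sum_(v in Y) (h1' v + h2' v))).
  apply: ler_sum => v vY; rewrite /h1' /h2'.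
  case: eqP => [->|n1]; first by rewrite (negbTE v12) addr0.
  case: eqP => [->|n2]; first by rewrite add0r.
  by rewrite hz ?addr0 //; apply/eqP.
rewrite big_split /=; apply: lerD.
  by apply: (le_trans (@sum_one _ Y h1' v1 _ _)); rewrite /h1' ?eqxx // => v _ /negbTE ->.
by apply: (le_trans (@sum_one _ Y h2' v2 _ _)); rewrite /h2' ?eqxx // => v _ /negbTE ->.
Qed.

Lemma sum_set2 (h : V -> R) a b : a != b -> \sum_(y in [set a; b]) h y = h a + h b.
Proof.
by move=> ab; rewrite big_setU1 ?inE // big_set1.
Qed.

Lemma edge2 e : e \in E -> exists a b, [/\ a != b, e = [set a; b] & [set a; b] \in E].
Proof.
move=> eE; have /eqP/cards2P [a [b [ab ee]]] := E2 _ eE.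
by exists a, b; rewrite -ee.
Qed.

Lemma set2_neq a b : [set a; b] \in E -> a != b.
Proof.
move=> h; apply/eqP => ab; have := E2 _ h; by rewrite ab finset.setUid cards1 => /eqP.
Qed.

Section Ball.
Variables (rho : R) (X : {set V}).
Hypothesis rho0 : 0 <= rho.
Hypothesis Xreach : forall v, v \in X -> reach v.
Hypothesis Xsep : forall u v, u \in X -> v \in X -> u != v -> 2 * rho <= d u v.

Definition fb v y := if reach y && (d v y < rho) then rho - d v y else 0.
Definition psi v e := if c e <= \sum_(y in e) fb v y then c e else \sum_(y in e) fb v y.
Definition gb v y := if d v y <= rho then d v y else rho.

Lemma fb_ge0 v y : 0 <= fb v y.
Proof. by rewrite /fb; case: ifP => // /andP [_ h]; rewrite subr_ge0 ltW. Qed.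

Lemma psi_ge0 v e : e \in E -> 0 <= psi v e.
Proof.
move=> eE; rewrite /psi; case: ifP => _; first exact: c0.
by apply: sumr_ge0 => y _; exact: fb_ge0.
Qed.

Lemma psi_le_c v e : psi v e <= c e.
Proof. by rewrite /psi; case: ifP => // /negbT; rewrite -ltNge => /ltW. Qed.

Lemma psi_le_f v e : psi v e <= \sum_(y in e) fb v y.
Proof. by rewrite /psi; case: ifP. Qed.

Lemma fb_pos v y : 0 < fb v y -> [/\ reach y, d v y < rho & fb v y = rho - d v y].
Proof. by rewrite /fb; case: ifP => [/andP [hy h] _|_]; [ | rewrite ltxx]. Qed.

Lemma fb_zero v y : ~~ (0 < fb v y) -> fb v y = 0.
Proof. by move=> h; apply: le_anti; rewrite fb_ge0 andbT leNgt. Qed.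

Lemma fb_disj u v y : u \in X -> v \in X -> u != v -> 0 < fb u y -> fb v y = 0.
Proof.
move=> uX vX uv /fb_pos [hy hu _]; apply: fb_zero; apply/negP => /fb_pos [_ hv _].
have := Xsep uX vX uv; have := dist_tri _ _ _ (Xreach uX) hy (Xreach vX).
rewrite (dist_sym y v); lra.
Qed.

Lemma psi_edge (Y : {set V}) e : Y \subset X -> e \in E -> \sum_(v in Y) psi v e <= c e.
Proof.
move=> sYX eE; have [a [b [ab -> abE]]] := edge2 eE.
have ce := c0 _ abE.
have psi_le_c : forall v, psi v [set a; b] <= c [set a; b] by move=> v; exact: psi_le_c.
have psi_le_f : forall v, psi v [set a; b] <= fb v a + fb v b.
  by move=> v; rewrite -sum_set2 //; exact: psi_le_f.
have psi0 : forall v, ~~ (0 < fb v a) -> ~~ (0 < fb v b) -> psi v [set a; b] = 0.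
  move=> v na nb; apply: le_anti; rewrite psi_ge0 // andbT.
  by apply: le_trans (psi_le_f v) _; rewrite (fb_zero na) (fb_zero nb) addr0.
have hX : forall v, v \in Y -> v \in X by move=> v; apply: (fintype.subsetP sYX).
case: (pickP (fun v => (v \in Y) && (0 < fb v a))) => [va /andP [vaY pa]|na];
case: (pickP (fun v => (v \in Y) && (0 < fb v b))) => [vb /andP [vbY pb]|nb].
- case: (eqVneq va vb) => [eab|vab]; first subst vb.
    apply: le_trans (psi_le_c va); apply: sum_one; first exact: psi_ge0.
    move=> v vY vva; apply: psi0; apply/negP => h.
      by have := fb_disj (hX _ vaY) (hX _ vY); rewrite eq_sym vva => /(_ _ isT pa) h'; rewrite h' ltxx in h.
    by have := fb_disj (hX _ vaY) (hX _ vY); rewrite eq_sym vva => /(_ _ isT pb) h'; rewrite h' ltxx in h.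
  apply: le_trans (@sum_two _ Y (fun v => psi v [set a; b]) va vb vab (psi_ge0 _ abE) (psi_ge0 _ abE) _) _.
    move=> v vY nva nvb; apply: psi0; apply/negP => h.
      by have := fb_disj (hX _ vaY) (hX _ vY); rewrite eq_sym nva => /(_ _ isT pa) h'; rewrite h' ltxx in h.
    by have := fb_disj (hX _ vbY) (hX _ vY); rewrite eq_sym nvb => /(_ _ isT pb) h'; rewrite h' ltxx in h.
  have fab : fb va b = 0 by apply: fb_disj (hX _ vbY) (hX _ vaY) _ pb; rewrite eq_sym.
  have fba : fb vb a = 0 by apply: fb_disj (hX _ vaY) (hX _ vbY) _ pa.
  apply: le_trans (lerD (psi_le_f va) (psi_le_f vb)) _.
  rewrite fab fba addr0 add0r.
  have [ra da ->] := fb_pos pa; have [rb db ->] := fb_pos pb.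
  have := Xsep (hX _ vaY) (hX _ vbY) vab.
  have := dist_tri _ _ _ (Xreach (hX _ vaY)) ra (Xreach (hX _ vbY)).
  have := dist_tri _ _ _ ra rb (Xreach (hX _ vbY)).
  have := dist_edge _ _ abE; rewrite (dist_sym b vb); lra.
- apply: le_trans (psi_le_c va); apply: sum_one; first exact: psi_ge0.
  move=> v vY vva; apply: psi0; last by have := nb v; rewrite vY /= => ->.
  apply/negP => h.
  by have := fb_disj (hX _ vaY) (hX _ vY); rewrite eq_sym vva => /(_ _ isT pa) h'; rewrite h' ltxx in h.
- apply: le_trans (psi_le_c vb); apply: sum_one; first exact: psi_ge0.
  move=> v vY vvb; apply: psi0; first by have := na v; rewrite vY /= => ->.
  apply/negP => h.
  by have := fb_disj (hX _ vbY) (hX _ vY); rewrite eq_sym vvb => /(_ _ isT pb) h'; rewrite h' ltxx in h.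
- apply: le_trans ce; rewrite big1 // => v vY; apply: psi0.
    by have := na v; rewrite vY /= => ->.
  by have := nb v; rewrite vY /= => ->.
Qed.


Lemma psi_ge v e x : x <= c e -> x <= \sum_(y in e) fb v y -> x <= psi v e.
Proof. by rewrite /psi; case: ifP. Qed.

Lemma psi_step v a b : reach v -> reach a -> [set a; b] \in E ->
  gb v b - gb v a <= psi v [set a; b].
Proof.
move=> hv ha abE.
have hb : reach b := reach_adj _ _ _ (fintype.subxx E) ha abE.
have ab := set2_neq abE.
have e1 := dist_edge _ _ abE.
have t1 := dist_tri _ _ _ hv ha hb.
have t2 := dist_tri _ _ _ hv hb ha.
have g1 := dist_ge0 v a; have g2 := dist_ge0 v b.
rewrite (dist_sym b a) in t2.
apply: psi_ge; rewrite ?sum_set2 // /gb /fb ?ha ?hb /=;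
  case: (leP (d v b) rho) => h1; case: (leP (d v a) rho) => h2;
  case: (ltP (d v a) rho) => h3; case: (ltP (d v b) rho) => h4; lra.
Qed.

Lemma psi_path_seq v (H : {set {set V}}) : H \subset E -> reach v ->
  forall p z, reach z -> path (adj H) z p ->
  gb v (last z p) - gb v z <= \sum_(ab <- zip (z :: p) p) psi v [set ab.1; ab.2].
Proof.
move=> sH hv; elim=> [|y p IH] z hz /=; first by rewrite subrr big_nil.
move/andP => [hzy hp]; rewrite big_cons /=.
have hy := reach_adj _ _ _ sH hz hzy.
have := psi_step hv hz (fintype.subsetP sH _ hzy).
have := IH y hy hp; lra.
Qed.

Lemma edges_uniq (p : seq V) z : uniq (z :: p) ->
  uniq [seq [set ab.1; ab.2] | ab <- zip (z :: p) p].
Proof.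
elim: p z => [|y p IH] z; first by [].
rewrite cons_uniq => /andP [zn un] /=.
rewrite IH // andbT; apply/mapP => -[[a b] hab /= eq].
have [ha hb _] := zip_props _ _ _ un hab.
have : z \in [set a; b] by rewrite -eq set21.
by case/set2P => ?; subst z; rewrite ?ha ?hb in zn.
Qed.

Lemma path_edges (H : {set {set V}}) p z a b : path (adj H) z p ->
  (a, b) \in zip (z :: p) p -> [set a; b] \in H.
Proof.
elim: p z => [|y p IH] z //= /andP [hzy hp]; rewrite inE => /orP [/eqP [-> ->] //|h].
exact: IH hp h.
Qed.

Lemma sum_setU_le (T : finType) (A B : {set T}) (h : T -> R) :
  (forall e, e \in A :|: B -> 0 <= h e) ->
  \sum_(e in A :|: B) h e <= \sum_(e in A) h e + \sum_(e in B) h e.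
Proof.
move=> h0; rewrite (big_setID A) finset.setIUl finset.setIid.
have -> : (B :&: A) = (A :&: B) by rewrite finset.setIC.
rewrite (finset.setUidPl (finset.subsetIl A B)) lerD2l.
apply: sum_sub.
  by apply/fintype.subsetP => e; rewrite !inE => /andP [nA /orP [eA|//]]; rewrite eA in nA.
by move=> e eB; apply: h0; rewrite inE eB orbT.
Qed.

Lemma gb_far v y : rho <= d v y -> gb v y = rho.
Proof. by rewrite /gb => h; case: leP => // h'; apply/le_anti; rewrite h h'. Qed.

Lemma gb_self v : gb v v = 0.
Proof. by rewrite /gb dist_refl rho0. Qed.

Lemma ball_lb v (H : {set {set V}}) : H \subset E -> v \in X -> connects H v r ->
  rho <= d v r -> rho <= \sum_(e in H) psi v e.
Proof.
move=> sH vX; have hv := Xreach vX.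
rewrite connectsE => /connectP [p hp lp]; rewrite lp.
case: (shortenP hp) => p' hp' up' _ dr.
have := psi_path_seq sH hv hv hp'; rewrite gb_self subr0 gb_far // => h1.
apply: le_trans h1 _.
rewrite -(big_map (fun ab => [set ab.1; ab.2]) predT (psi v)).
rewrite (big_uniq _ (edges_uniq up')).
rewrite -(@eq_bigl _ _ _ _ _ (fun e => e \in [set e | e \in [seq [set ab.1; ab.2] | ab <- zip (v :: p') p']])); last by move=> e; rewrite inE.
apply: sum_sub; last by move=> e eH; apply: psi_ge0; rewrite (fintype.subsetP sH).
apply/fintype.subsetP => e; rewrite inE => /mapP [[a b] hab ->].
exact: path_edges hp' hab.
Qed.

End Ball.


Lemma csub (H1 H2 : {set {set V}}) x y : connects H1 x y -> H1 \subset H2 -> connects H2 x y.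
Proof. by move=> h s12; exact: connects_sub s12 h. Qed.

Lemma distS_le v (S' : {set V}) w : w \in S' -> distS E c v S' <= d v w.
Proof.
move=> wS; apply: ge_inf; last by exists w => //; rewrite inE.
by exists 0 => x [w' _ <-]; exact: dist_ge0.
Qed.

Lemma pad (U : {set V}) n (A : {set V}) : A \subset U -> (#|A| <= n <= #|U|)%N ->
  exists D : {set V}, [/\ A \subset D, D \subset U & #|D| = n].
Proof.
have [m] := ubnP (n - #|A|)%N; elim: m A => // m IH A hm AU /andP [An nU].
case: (eqVneq #|A| n) => [<-|ne]; first by exists A; split.
have lt : (#|A| < n)%N by rewrite ltn_neqAle ne An.
have : ~~ (U \subset A).
  apply/negP => UA; have := subset_leq_card UA; move: lt nU; clear; lia.
case/fintype.subsetPn => x xU xA.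
have h1 : (n - #|x |: A| < m)%N by rewrite cardsU1 xA; move: hm lt; clear; lia.
have h2 : x |: A \subset U by rewrite finset.subUset AU andbT finset.sub1set.
have h3 : (#|x |: A| <= n <= #|U|)%N by rewrite cardsU1 xA nU andbT; move: lt; clear; lia.
have [D [sD DU cD]] := IH (x |: A) h1 h2 h3.
by exists D; split => //; apply: fintype.subset_trans sD; exact: finset.subsetUr.
Qed.

Section Final.
Variables (U : {set V}) (lambda : R) (k : nat) (beta T : R)
  (E0 : {set {set V}}) (ED : {set V} -> {set {set V}}) (s : seq V).
Hypothesis hk : (1 <= k)%N.
Hypothesis kU : (k <= #|U|)%N.
Hypothesis T0 : 0 <= T.
Hypothesis b2 : 2 < beta.
Hypothesis feas : feasible E r U k E0 ED.
Hypothesis gr : greedy_run E c r U k beta T s.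
Hypothesis sT : second_stage c U k ED <= T.

Local Notation Ts := (second_stage c U k ED).
Local Notation Phi := (edge_cost c E0).

Lemma E0E : E0 \subset E. Proof. by case: feas. Qed.

Lemma EDE D : D \in scenarios U k -> ED D \subset E.
Proof. by case: feas => _ h /h []. Qed.

Lemma EDcon D v : D \in scenarios U k -> v \in D -> connects (E0 :|: ED D) v r.
Proof. by case: feas => _ h /h [] _; apply. Qed.

Lemma EDle D : D \in scenarios U k -> edge_cost c (ED D) <= Ts.
Proof.
move=> hD; rewrite /second_stage (bigD1 D) //=.
by rewrite le_max lexx.
Qed.

Lemma scen_pad (t : seq V) : uniq t -> {subset t <= U} -> (size t <= k)%N ->
  exists D, D \in scenarios U k /\ {subset t <= D}.
Proof.
move=> ut tU st.
have sA : [set x in t] \subset U by apply/fintype.subsetP => x; rewrite inE; exact: tU.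
have cA : #|[set x in t]| = size t by rewrite cardsE; exact/card_uniqP.
have hh : (#|[set x in t]| <= k <= #|U|)%N by rewrite cA st kU.
have [D [sD DU cD]] := pad sA hh.
exists D; split; first by rewrite inE DU cD eqxx.
by move=> x xt; apply: (fintype.subsetP sD); rewrite inE.
Qed.

Lemma Ts_ge0 : 0 <= Ts.
Proof.
have s0 : {subset [::] <= U} by [].
have [D [hD _]] := @scen_pad [::] isT s0 isT.
apply: le_trans (EDle hD); apply: ecost_ge0; exact: EDE.
Qed.

Lemma U_reach v : v \in U -> reach v.
Proof.
move=> vU; have s1 : {subset [:: v] <= U} by move=> x; rewrite inE => /eqP ->.
have [D [hD sD]] := @scen_pad [:: v] isT s1 hk.
have := EDcon hD (sD v (mem_head _ _)); rewrite connects_sym => h.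
apply: (csub h); rewrite finset.subUset E0E; exact: EDE.
Qed.

Lemma take_scen (t : seq V) : uniq t -> {subset t <= U} -> (k <= size t)%N ->
  [set x in take k t] \in scenarios U k.
Proof.
move=> ut tU kt; rewrite inE; apply/andP; split.
  apply/fintype.subsetP => x; rewrite inE => /mem_take; exact: tU.
by rewrite cardsE (card_uniqP (take_uniq _ ut)) size_takel.
Qed.

Lemma cover (t : seq V) : uniq t -> {subset t <= U} -> exists Hc : {set {set V}},
  [/\ Hc \subset E, forall v, v \in t -> connects (E0 :|: Hc) v r &
      edge_cost c Hc <= (size t %/ k)%:R * T + Ts].
Proof.
have [m] := ubnP (size t); elim: m t => // m IH t hm ut tU.
case: (leqP (size t) k) => st.
  have [D [hD sD]] := scen_pad ut tU st.
  exists (ED D); split; first exact: EDE.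
    by move=> v vt; apply: EDcon hD (sD v vt).
  apply: le_trans (EDle hD) _; rewrite lerDr mulr_ge0 //.
have kt : (k <= size t)%N by apply: ltnW.
have hD := take_scen ut tU kt.
have ud : uniq (drop k t) := drop_uniq _ ut.
have h1 : (size (drop k t) < m)%N by rewrite size_drop; move: hm kt hk; clear; lia.
have h2 : {subset drop k t <= U} by move=> x /mem_drop; exact: tU.
have [Hc [sHc cHc wHc]] := IH (drop k t) h1 ud h2.
exists (ED [set x in take k t] :|: Hc); split.
- by rewrite finset.subUset sHc EDE.
- move=> v; rewrite -{1}(cat_take_drop k t) mem_cat => /orP [vt|vd].
    apply: (csub (EDcon hD (_ : v \in _))); first by rewrite inE.
    by rewrite finset.setUS // finset.subsetUl.
  apply: (csub (cHc _ vd)).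
  by rewrite finset.setUS // finset.subsetUr.
- apply: le_trans (sum_setU_le _) _.
    by move=> e; rewrite inE => /orP [] he; apply: c0;
      [apply: (fintype.subsetP (EDE hD)) | apply: (fintype.subsetP sHc)].
  have -> : (size t %/ k = 1 + size (drop k t) %/ k)%N.
    rewrite size_drop -{1}(subnKC kt) divnDl ?dvdnn // divnn.
    by move: hk; case: k.
  rewrite natrD mulrDl mul1r; have := EDle hD; move: wHc sT.
  rewrite /edge_cost; lra.
Qed.


Definition theta := beta * T / k%:R.
Definition rho := theta / 2.

Lemma kpos : (0 : R) < k%:R.
Proof. by rewrite ltr0n. Qed.

Lemma theta0 : 0 <= theta.
Proof.
have b0 : 0 <= beta by move: b2; lra.
by rewrite /theta divr_ge0 ?ler0n // mulr_ge0.
Qed.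

Lemma rho0 : 0 <= rho.
Proof. by rewrite /rho divr_ge0 // theta0. Qed.

Lemma sep_ij i j : (i < size s)%N -> (j < i)%N -> theta < d (nth r s i) (nth r s j).
Proof.
move=> hi ji; have [_ h] := gr.1 i hi.
apply: lt_le_trans h (distS_le _ _); rewrite !inE; apply/orP; right.
by rewrite -(nth_take r ji) mem_nth // size_takel // ltnW.
Qed.

Lemma sep_r i : (i < size s)%N -> theta < d (nth r s i) r.
Proof.
move=> hi; have [_ h] := gr.1 i hi.
by apply: lt_le_trans h (distS_le _ _); rewrite !inE eqxx.
Qed.

Lemma s_uniq : uniq s.
Proof.
case: (boolP (uniq s)) => // /(uniqPn r) [i [j [ij js eq]]].
have := sep_ij js ij; rewrite eq dist_refl; have := theta0; lra.
Qed.

Lemma sU : {subset s <= U}.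
Proof.
move=> x xs; have hi : (index x s < size s)%N by rewrite index_mem.
by have [h _] := gr.1 _ hi; rewrite nth_index in h.
Qed.

Definition Xs := [set x in s].

Lemma Xs_reach v : v \in Xs -> reach v.
Proof. by rewrite inE => /sU; exact: U_reach. Qed.

Lemma Xs_sep u v : u \in Xs -> v \in Xs -> u != v -> 2 * rho <= d u v.
Proof.
rewrite !inE => us vs uv.
have e2 : 2 * rho = theta by rewrite /rho; field.
rewrite e2 -(nth_index r us) -(nth_index r vs); apply: ltW.
have hu : (index u s < size s)%N by rewrite index_mem.
have hv : (index v s < size s)%N by rewrite index_mem.
case: (ltngtP (index u s) (index v s)) => h.
- by rewrite dist_sym; apply: sep_ij.
- by apply: sep_ij.
- by move: uv; rewrite -(nth_index r us) -(nth_index r vs) h eqxx.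
Qed.

Definition av v := \sum_(e in E0) psi rho v e.

Lemma av_ge0 v : 0 <= av v.
Proof.
apply: sumr_ge0 => e eE; apply: psi_ge0; exact: (fintype.subsetP E0E).
Qed.

Lemma group D : D \in scenarios U k -> D \subset Xs ->
  k%:R * rho - Ts <= \sum_(v in D) av v.
Proof.
move=> hD DX.
have cD : #|D| = k by move: hD; rewrite inE => /andP [_ /eqP].
have sH : E0 :|: ED D \subset E by rewrite finset.subUset E0E EDE.
have hv : forall v, v \in D ->
    rho <= av v + \sum_(e in ED D) psi rho v e.
  move=> v vD; have vX := fintype.subsetP DX _ vD.
  have h1 := ball_lb rho0 Xs_reach sH vX (EDcon hD vD).
  have h2 : rho <= d v r.
    move: (vX); rewrite inE => vs; have hi : (index v s < size s)%N by rewrite index_mem.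
    have := sep_r hi; rewrite nth_index // => h; rewrite /rho; have := theta0; lra.
  apply: le_trans (h1 h2) _; apply: sum_setU_le => e he; apply: psi_ge0.
  exact: (fintype.subsetP sH).
have hs : \sum_(v in D) rho <= \sum_(v in D) (av v + \sum_(e in ED D) psi rho v e).
  by apply: ler_sum.
rewrite big_split /= sumr_const cD -mulr_natr in hs.
have hE : \sum_(v in D) \sum_(e in ED D) psi rho v e <= edge_cost c (ED D).
  rewrite (exchange_big _ _ (index_enum _)) /=; apply: ler_sum => e eE.
  apply: (psi_edge Xs_reach Xs_sep DX).
  exact: (fintype.subsetP (EDE hD)).
have := EDle hD; move: hs hE; lra.
Qed.

Lemma group_all (t : seq V) : uniq t -> {subset t <= s} ->
  (size t %/ k)%:R * (k%:R * rho - Ts) <= \sum_(v <- t) av v.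
Proof.
have [m] := ubnP (size t); elim: m t => // m IH t hm ut ts.
case: (ltnP (size t) k) => st.
  by rewrite divn_small // mul0r; apply: sumr_ge0 => v _; exact: av_ge0.
have tU : {subset t <= U} by move=> x /ts; exact: sU.
have hD := take_scen ut tU st.
have ud : uniq (drop k t) := drop_uniq _ ut.
have h1 : (size (drop k t) < m)%N by rewrite size_drop; move: hm st hk; clear; lia.
have h2 : {subset drop k t <= s} by move=> x /mem_drop; exact: ts.
have IH' := IH (drop k t) h1 ud h2.
rewrite -{2}(cat_take_drop k t) big_cat /=.
have DX : [set x in take k t] \subset Xs.
  by apply/fintype.subsetP => x; rewrite !inE => /mem_take; exact: ts.
have G := group hD DX.
have -> : \sum_(v <- take k t) av v = \sum_(v in [set x in take k t]) av v.
  rewrite (big_uniq _ (take_uniq _ ut)); apply: eq_bigl => x; by rewrite inE.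
have -> : (size t %/ k = 1 + size (drop k t) %/ k)%N.
  rewrite size_drop -{1}(subnKC st) divnDl ?dvdnn // divnn.
  by move: hk; case: k.
rewrite natrD mulrDl mul1r; lra.
Qed.

Lemma lower : (size s %/ k)%:R * (k%:R * rho - Ts) <= Phi.
Proof.
apply: le_trans (group_all s_uniq (fun x h => h)) _.
rewrite (big_uniq _ s_uniq).
rewrite -(@eq_bigl _ _ _ _ _ (fun v => v \in Xs)); last by move=> v; rewrite inE.
rewrite /av (exchange_big _ _ (index_enum _)) /=.
apply: ler_sum => e eE; apply: (psi_edge Xs_reach Xs_sep (fintype.subxx _)).
exact: (fintype.subsetP E0E).
Qed.

Lemma final_bound (Fm : {set V * V}) : mst_on E c (greedy_set r s) Fm ->
  mtree_weight E c Fm <= (2 * beta / (beta - 2)) * Phi + 2 * Ts.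
Proof.
move=> mst.
have [Hc [sHc cHc wHc]] := cover s_uniq sU.
have sH : E0 :|: Hc \subset E by rewrite finset.subUset E0E sHc.
have rS : r \in greedy_set r s by rewrite /greedy_set !inE eqxx.
have cS : forall y, y \in greedy_set r s -> connects (E0 :|: Hc) r y.
  move=> y; rewrite /greedy_set !inE => /orP [/eqP ->|ys]; first exact: connect0.
  by rewrite connects_sym; apply: cHc.
have st := steiner_bound _ _ _ sH rS cS mst.
have hU : edge_cost c (E0 :|: Hc) <= Phi + edge_cost c Hc.
  apply: sum_setU_le => e he; apply: c0; exact: (fintype.subsetP sH).
have lw := lower.
set q := (size s %/ k)%:R in wHc lw.
have q0 : 0 <= q by rewrite /q ler0n.
have krho : k%:R * rho = beta * T / 2.
  rewrite /rho /theta; field; rewrite pnatr_eq0; move: hk; case: k => //.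
rewrite krho in lw.
have lw2 : q * (beta * T / 2 - T) <= Phi.
  apply: le_trans lw; apply: ler_wpM2l => //; move: sT; lra.
have b0 : 0 < beta - 2 by move: b2; lra.
have qT : q * T <= 2 * Phi / (beta - 2).
  rewrite ler_pdivlMr //.
  have -> : q * T * (beta - 2) = 2 * (q * (beta * T / 2 - T)) by field.
  lra.
have eqb : 2 * beta / (beta - 2) * Phi = 2 * Phi + 2 * (2 * Phi / (beta - 2)).
  by field; rewrite subr_eq0; apply/eqP => h; move: b0; rewrite h subrr ltxx.
rewrite eqb; lra.
Qed.

End Final.
End Main.

Unset Implicit Arguments.

Theorem mainTheorem17 (R : realType) (V : finType) (E : {set {set V}}) (c : {set V} -> R)
    (r : V) (U : {set V}) (lambda : R) (k : nat) (beta T : R)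
    (E0 : {set {set V}}) (ED : {set V} -> {set {set V}}) (s : seq V) (F : {set V * V}) :
  (forall e, e \in E -> #|e| = 2%N) ->
  (forall e, e \in E -> 0 <= c e) ->
  1 <= lambda ->
  (1 <= k)%N -> (k <= #|U|)%N ->
  0 <= T -> 2 < beta ->
  optimal E c r U lambda k E0 ED ->
  greedy_run E c r U k beta T s ->
  mst_on E c (greedy_set r s) F ->
  second_stage c U k ED <= T ->
  mtree_weight E c F <=
    (2 * beta / (beta - 2)) * edge_cost c E0 + 2 * second_stage c U k ED.
Proof.
move=> E2 c0 _ hk kU T0 b2 [feas _] gr mst sT.
exact: (final_bound E2 c0 hk kU T0 b2 feas gr sT mst).
Qed.
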